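(* Let $\widehat\rho:\mathrm{U}(1)\times\mathrm{SU}(2)\to\mathrm{U}(2)$, $(z,A)\mapsto zA$ (a double cover with kernel $\{(1,I_2),(-1,-I_2)\}$). For every group automorphism $\tau$ of $\mathrm{U}(2)$ there is a unique automorphism $\widetilde\tau$ of $\mathrm{U}(1)\times\mathrm{SU}(2)$ such that $\widehat\rho\circ\widetilde\tau=\tau\circ\widehat\rho$.
   Context: $\mathrm{U}(1)=\{z\in\mathbb C\mid |z|=1\}$, identified with the scalar matrices $zI_2$ in $\mathrm{U}(2)$; automorphisms are abstract group automorphisms. *)

(* Defs.v *)
(* genuine complex numbers are needed, since abstract group
   automorphisms of U(2) depend on the field Cx itself (not algC). *)
From Stdlib Require Import Reals.
Open Scope R_scope.

Record Cx := mkC { Re : R; Im : R }.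

Definition C0 : Cx := mkC 0 0.
Definition C1 : Cx := mkC 1 0.
Definition Copp (z : Cx) : Cx := mkC (- Re z) (- Im z).
Definition Cadd (z w : Cx) : Cx := mkC (Re z + Re w) (Im z + Im w).
Definition Cmul (z w : Cx) : Cx :=
  mkC (Re z * Re w - Im z * Im w) (Re z * Im w + Im z * Re w).
Definition Cconj (z : Cx) : Cx := mkC (Re z) (- Im z).
Definition Cnorm2 (z : Cx) : R := Re z * Re z + Im z * Im z.

Record M2 := mkM { m11 : Cx; m12 : Cx; m21 : Cx; m22 : Cx }.

Definition Mmul (A B : M2) : M2 :=
  mkM (Cadd (Cmul (m11 A) (m11 B)) (Cmul (m12 A) (m21 B)))
      (Cadd (Cmul (m11 A) (m12 B)) (Cmul (m12 A) (m22 B)))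
      (Cadd (Cmul (m21 A) (m11 B)) (Cmul (m22 A) (m21 B)))
      (Cadd (Cmul (m21 A) (m12 B)) (Cmul (m22 A) (m22 B))).
Definition Mid : M2 := mkM C1 C0 C0 C1.
Definition Madj (A : M2) : M2 :=
  mkM (Cconj (m11 A)) (Cconj (m21 A)) (Cconj (m12 A)) (Cconj (m22 A)).
Definition Mdet (A : M2) : Cx :=
  Cadd (Cmul (m11 A) (m22 A)) (Copp (Cmul (m12 A) (m21 A))).
Definition Mscale (z : Cx) (A : M2) : M2 :=
  mkM (Cmul z (m11 A)) (Cmul z (m12 A)) (Cmul z (m21 A)) (Cmul z (m22 A)).

Definition inU1 (z : Cx) : Prop := Cnorm2 z = 1.
Definition inU2 (A : M2) : Prop := Mmul (Madj A) A = Mid.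
Definition inSU2 (A : M2) : Prop := inU2 A /\ Mdet A = C1.

Definition inU1SU2 (p : Cx * M2) : Prop := inU1 (fst p) /\ inSU2 (snd p).
Definition prodMul (p q : Cx * M2) : Cx * M2 :=
  (Cmul (fst p) (fst q), Mmul (snd p) (snd q)).

Definition rhohat (p : Cx * M2) : M2 := Mscale (fst p) (snd p).

Definition is_group_aut {T : Type} (P : T -> Prop) (mul : T -> T -> T)
  (f : T -> T) : Prop :=
  (forall x, P x -> P (f x)) /\
  (forall x y, P x -> P y -> f (mul x y) = mul (f x) (f y)) /\
  (forall x y, P x -> P y -> f x = f y -> x = y) /\
  (forall y, P y -> exists x, P x /\ f x = y).

(* Main.v *)
Require Import Defs.
From Stdlib Require Import Reals Nsatz Lra.
Open Scope R_scope.

Lemma ceq (z w : Cx) : Re z = Re w -> Im z = Im w -> z = w.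
Proof. destruct z, w; simpl; intros; subst; reflexivity. Qed.
Lemma meq (A B : M2) : m11 A = m11 B -> m12 A = m12 B -> m21 A = m21 B -> m22 A = m22 B -> A = B.
Proof. destruct A, B; simpl; intros; subst; reflexivity. Qed.

Ltac dM A := let a := fresh "a" in let b := fresh "b" in let c := fresh "c" in let d := fresh "d" in
  let a' := fresh "a" in let b' := fresh "b" in let c' := fresh "c" in let d' := fresh "d" in
  destruct A as [[a a'] [b b'] [c c'] [d d']].
Ltac mring := apply meq; apply ceq; simpl; ring.
Ltac meqs := repeat (apply meq || apply ceq); simpl.

Lemma Mmul_assoc A B C : Mmul A (Mmul B C) = Mmul (Mmul A B) C.
Proof. dM A; dM B; dM C; meqs; ring. Qed.
Lemma Mmul_id_l A : Mmul Mid A = A.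
Proof. dM A; meqs; ring. Qed.
Lemma Mmul_id_r A : Mmul A Mid = A.
Proof. dM A; meqs; ring. Qed.
Lemma Madj_mul A B : Madj (Mmul A B) = Mmul (Madj B) (Madj A).
Proof. dM A; dM B; meqs; ring. Qed.
Lemma Madj_adj A : Madj (Madj A) = A.
Proof. dM A; meqs; ring. Qed.
Lemma Madj_id : Madj Mid = Mid.
Proof. meqs; ring. Qed.
Lemma Mdet_mul A B : Mdet (Mmul A B) = Cmul (Mdet A) (Mdet B).
Proof. dM A; dM B; meqs; ring. Qed.
Lemma Mdet_adj A : Mdet (Madj A) = Cconj (Mdet A).
Proof. dM A; meqs; ring. Qed.
Lemma Mdet_id : Mdet Mid = Defs.C1.
Proof. meqs; ring. Qed.

Definition adjm (A : M2) : M2 := mkM (m22 A) (Copp (m12 A)) (Copp (m21 A)) (m11 A).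
Lemma adjm_r A : Mmul A (adjm A) = Mscale (Mdet A) Mid.
Proof. dM A; meqs; ring. Qed.
Lemma adjm_l A : Mmul (adjm A) A = Mscale (Mdet A) Mid.
Proof. dM A; meqs; ring. Qed.
Lemma Mscale_mul_r z A B : Mmul A (Mscale z B) = Mscale z (Mmul A B).
Proof. dM A; dM B; meqs; ring. Qed.
Lemma Mscale_mul_l z A B : Mmul (Mscale z A) B = Mscale z (Mmul A B).
Proof. dM A; dM B; meqs; ring. Qed.
Lemma Mscale_scale z w A : Mscale z (Mscale w A) = Mscale (Cmul z w) A.
Proof. dM A; meqs; ring. Qed.
Lemma Mscale_C1 A : Mscale Defs.C1 A = A.
Proof. dM A; meqs; ring. Qed.

Lemma left_right_inv M N : Mmul N M = Mid -> Mmul M N = Mid.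
Proof.
  intro H.
  assert (E1 : adjm M = Mscale (Mdet M) N).
  { rewrite <- (Mmul_id_l (adjm M)), <- H, <- Mmul_assoc, adjm_r,
      Mscale_mul_r, Mmul_id_r. reflexivity. }
  assert (E2 : Cmul (Mdet N) (Mdet M) = Defs.C1).
  { rewrite <- Mdet_mul, H. apply Mdet_id. }
  rewrite <- (Mscale_C1 (Mmul M N)), <- E2, <- Mscale_scale, <- Mscale_mul_r, <- E1, adjm_r,
    Mscale_scale, E2, Mscale_C1. reflexivity.
Qed.

Lemma U2_right A : inU2 A -> Mmul A (Madj A) = Mid.
Proof. unfold inU2; apply left_right_inv. Qed.
Lemma U2_mul A B : inU2 A -> inU2 B -> inU2 (Mmul A B).
Proof.
  unfold inU2; intros HA HB. rewrite Madj_mul, <- Mmul_assoc, (Mmul_assoc (Madj A)), HA, Mmul_id_l; exact HB.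
Qed.
Lemma U2_adj A : inU2 A -> inU2 (Madj A).
Proof. intro H; unfold inU2; rewrite Madj_adj; apply U2_right, H. Qed.
Lemma U2_id : inU2 Mid.
Proof. unfold inU2; rewrite Madj_id; apply Mmul_id_l. Qed.
#[export] Hint Resolve U2_mul U2_adj U2_id : u2.

Lemma det_unit X : inU2 X -> Cmul (Cconj (Mdet X)) (Mdet X) = Defs.C1.
Proof. intro H; rewrite <- Mdet_adj, <- Mdet_mul, H; apply Mdet_id. Qed.

Lemma unit_C (z : Cx) : Cmul (Cconj z) z = Defs.C1 -> Re z * Re z + Im z * Im z = 1.
Proof. destruct z as [x y]; unfold Cmul, Cconj, Defs.C1; simpl; intro H; injection H; intros; nra. Qed.
Section Tau.
Variable tau : M2 -> M2.
Hypothesis Ht : is_group_aut inU2 Mmul tau.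

Lemma tU X : inU2 X -> inU2 (tau X).
Proof. apply Ht. Qed.
Lemma tM X Y : inU2 X -> inU2 Y -> tau (Mmul X Y) = Mmul (tau X) (tau Y).
Proof. apply Ht. Qed.
Lemma tI : tau Mid = Mid.
Proof.
  assert (H := tM Mid Mid U2_id U2_id). rewrite Mmul_id_l in H.
  assert (U := U2_right _ (tU _ U2_id)).
  set (T := tau Mid) in *.
  transitivity (Mmul (Mmul T T) (Madj T)).
  - rewrite <- Mmul_assoc, U, Mmul_id_r; reflexivity.
  - rewrite <- H; exact U.
Qed.
Lemma tA X : inU2 X -> tau (Madj X) = Madj (tau X).
Proof.
  intro HX.
  assert (H1 : Mmul (tau (Madj X)) (tau X) = Mid) by (rewrite <- tM, HX; auto using tI with u2).
  rewrite <- (Mmul_id_r (tau (Madj X))), <- (U2_right _ (tU _ HX)), Mmul_assoc, H1, Mmul_id_l.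
  reflexivity.
Qed.
End Tau.

Definition comm X Y := Mmul (Mmul X Y) (Mmul (Madj X) (Madj Y)).
Definition conjm C M := Mmul (Mmul C M) (Madj C).
Definition W X1 P1 C Q X2 P2 := Mmul (comm X1 P1) (conjm C (conjm Q (comm X2 P2))).

Lemma comm_U X Y : inU2 X -> inU2 Y -> inU2 (comm X Y).
Proof. unfold comm; auto with u2. Qed.
Lemma conjm_U X Y : inU2 X -> inU2 Y -> inU2 (conjm X Y).
Proof. unfold conjm; auto with u2. Qed.
#[export] Hint Resolve comm_U conjm_U : u2.
Lemma W_U X1 P1 C Q X2 P2 : inU2 X1 -> inU2 P1 -> inU2 C -> inU2 Q -> inU2 X2 -> inU2 P2 ->
  inU2 (W X1 P1 C Q X2 P2).
Proof. unfold W; auto with u2. Qed.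

Lemma tau_comm tau : is_group_aut inU2 Mmul tau -> forall X Y, inU2 X -> inU2 Y ->
  tau (comm X Y) = comm (tau X) (tau Y).
Proof. intros Ht X Y HX HY; unfold comm. rewrite !(tM tau Ht), !(tA tau Ht); auto with u2. Qed.
Lemma tau_conjm tau : is_group_aut inU2 Mmul tau -> forall X Y, inU2 X -> inU2 Y ->
  tau (conjm X Y) = conjm (tau X) (tau Y).
Proof. intros Ht X Y HX HY; unfold conjm. rewrite !(tM tau Ht), !(tA tau Ht); auto with u2. Qed.
Lemma tau_W tau : is_group_aut inU2 Mmul tau -> forall X1 P1 C Q X2 P2,
  inU2 X1 -> inU2 P1 -> inU2 C -> inU2 Q -> inU2 X2 -> inU2 P2 ->
  tau (W X1 P1 C Q X2 P2) = W (tau X1) (tau P1) (tau C) (tau Q) (tau X2) (tau P2).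
Proof.
  intros Ht; intros; unfold W.
  rewrite (tM tau Ht), (tau_comm tau Ht), !(tau_conjm tau Ht), (tau_comm tau Ht); auto with u2.
Qed.

Lemma cx4 (z w : Cx) : Cmul (Cconj z) z = Defs.C1 -> Cmul (Cconj w) w = Defs.C1 ->
  Cmul (Cmul z w) (Cmul (Cconj z) (Cconj w)) = Defs.C1.
Proof.
  destruct z as [a b], w as [c d]; unfold Cmul, Cconj, Defs.C1; simpl; intros H1 H2.
  injection H1; injection H2; intros; apply ceq; simpl; nsatz.
Qed.
Lemma cx3 (z w : Cx) : Cmul (Cconj z) z = Defs.C1 ->
  Cmul (Cmul z w) (Cconj z) = w.
Proof.
  destruct z as [a b], w as [c d]; unfold Cmul, Cconj, Defs.C1; simpl; intros H1.
  injection H1; intros; apply ceq; simpl; nsatz.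
Qed.

Lemma det_comm X Y : inU2 X -> inU2 Y -> Mdet (comm X Y) = Defs.C1.
Proof.
  intros; unfold comm; rewrite !Mdet_mul, !Mdet_adj; apply cx4; apply det_unit; auto.
Qed.
Lemma det_conjm X Y : inU2 X -> Mdet (conjm X Y) = Mdet Y.
Proof.
  intros; unfold conjm; rewrite !Mdet_mul, !Mdet_adj; apply cx3; apply det_unit; auto.
Qed.
Lemma det_W X1 P1 C Q X2 P2 : inU2 X1 -> inU2 P1 -> inU2 C -> inU2 Q -> inU2 X2 -> inU2 P2 ->
  Mdet (W X1 P1 C Q X2 P2) = Defs.C1.
Proof.
  intros; unfold W. rewrite Mdet_mul, !det_conjm, !det_comm; auto.
  apply ceq; simpl; ring.
Qed.
Lemma SU2_adj A : inSU2 A -> Madj A = adjm A.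
Proof.
  intros [HU HD].
  rewrite <- (Mmul_id_r (Madj A)).
  assert (E : Mmul A (adjm A) = Mid) by (rewrite adjm_r, HD, Mscale_C1; reflexivity).
  rewrite <- E, Mmul_assoc, HU, Mmul_id_l; reflexivity.
Qed.

Lemma SU2_form A : inSU2 A -> exists x y u v, x*x+y*y+u*u+v*v = 1 /\
  A = mkM (mkC x y) (mkC u v) (mkC (-u) v) (mkC x (-y)).
Proof.
  intro H. assert (E := SU2_adj A H). destruct H as [HU _].
  dM A. unfold inU2 in HU; unfold Madj, adjm, Cconj, Copp in E; simpl in *.
  injection E; injection HU; intros.
  exists a, a0, b, b0. split.
  - nsatz.
  - apply meq; apply ceq; simpl; lra.
Qed.

Lemma polar x y : exists r p q, p*p+q*q = 1 /\ x = r*p /\ y = r*q /\ r*r = x*x+y*y.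
Proof.
  set (r := sqrt (x*x+y*y)).
  assert (Hr : r*r = x*x+y*y) by (apply sqrt_sqrt; nra).
  destruct (Req_dec r 0) as [H0|H0].
  - exists r, 1, 0. rewrite H0 in Hr. assert (x = 0) by nra. assert (y = 0) by nra.
    rewrite H0; repeat split; subst; ring.
  - exists r, (x/r), (y/r). repeat split; try (field; auto); try exact Hr.
    replace (x/r*(x/r)+y/r*(y/r)) with ((x*x+y*y)/(r*r)) by (field; auto).
    rewrite <- Hr; field; auto.
Qed.

Lemma inv_sqrt2 : exists c, 2*c*c = 1.
Proof.
  exists (/ sqrt 2). assert (H : sqrt 2 * sqrt 2 = 2) by (apply sqrt_sqrt; lra).
  assert (sqrt 2 <> 0) by (intro E; rewrite E in H; lra).
  rewrite <- H at 1. field; auto.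
Qed.

Definition diag (z w : Cx) := mkM z Defs.C0 Defs.C0 w.
Definition Psw := mkM Defs.C0 Defs.C1 Defs.C1 Defs.C0.
Lemma comm_diag z : comm (diag z Defs.C1) Psw = diag z (Cconj z).
Proof. destruct z; unfold comm, diag, Psw; meqs; ring. Qed.
Lemma conjQ c r t : 2*c*c = 1 ->
  conjm (mkM (mkC c 0) (mkC c 0) (mkC 0 (-c)) (mkC 0 c)) (diag (mkC r t) (mkC r (-t)))
  = mkM (mkC r 0) (mkC (-t) 0) (mkC t 0) (mkC r 0).
Proof. intro H; unfold conjm, diag; meqs; nsatz. Qed.
Lemma conjC g1 g2 r s : g1*g1+g2*g2 = 1 ->
  conjm (diag Defs.C1 (mkC g1 g2)) (mkM (mkC r 0) (mkC s 0) (mkC (-s) 0) (mkC r 0))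
  = mkM (mkC r 0) (mkC (s*g1) (-(s*g2))) (mkC (-(s*g1)) (-(s*g2))) (mkC r 0).
Proof. intro H; unfold conjm, diag; meqs; nsatz. Qed.
Lemma diag_U z w : Re z * Re z + Im z * Im z = 1 -> Re w * Re w + Im w * Im w = 1 -> inU2 (diag z w).
Proof. destruct z, w; simpl; intros; unfold inU2, diag; meqs; nsatz. Qed.
Lemma Psw_U : inU2 Psw.
Proof. unfold inU2; meqs; ring. Qed.
Lemma Q_U c : 2*c*c = 1 -> inU2 (mkM (mkC c 0) (mkC c 0) (mkC 0 (-c)) (mkC 0 c)).
Proof. intros; unfold inU2; meqs; nsatz. Qed.

Lemma decomp B : inSU2 B -> exists X1 P1 C Q X2 P2, inU2 X1 /\ inU2 P1 /\ inU2 C /\ inU2 Q /\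
  inU2 X2 /\ inU2 P2 /\ B = W X1 P1 C Q X2 P2.
Proof.
  intro H. destruct (SU2_form B H) as (a1 & a2 & b1 & b2 & Hn & ->).
  destruct (polar a1 a2) as (r & p & q & Hpq & Ha1 & Ha2 & Hr).
  destruct (polar b1 b2) as (s & e & f & Hef & Hb1 & Hb2 & Hs).
  destruct inv_sqrt2 as [c Hc].
  assert (Hrs : r*r+s*s = 1) by nra.
  assert (Hg : (p*e+q*f)*(p*e+q*f) + (q*e - p*f)*(q*e-p*f) = 1) by nsatz.
  exists (diag (mkC p q) Defs.C1), Psw, (diag Defs.C1 (mkC (p*e+q*f) (q*e - p*f))),
    (mkM (mkC c 0) (mkC c 0) (mkC 0 (-c)) (mkC 0 c)), (diag (mkC r (-s)) Defs.C1), Psw.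
  repeat split; try apply Psw_U; try apply Q_U; auto; try apply diag_U; simpl; try nsatz; try ring.
  unfold W. rewrite !comm_diag.
  replace (Cconj (mkC r (-s))) with (mkC r (- - s)) by (apply ceq; simpl; ring).
  rewrite conjQ by auto. replace (- - s) with s by ring. rewrite conjC by auto.
  unfold diag; meqs; subst; nsatz.
Qed.
Definition sc z := Mscale z Mid.
Definition Dm := diag Defs.C1 (mkC (-1) 0).
Lemma sc_comm z Y : Mmul (sc z) Y = Mmul Y (sc z).
Proof. destruct z; dM Y; unfold sc; meqs; ring. Qed.
Lemma rho_sc z A : Mscale z A = Mmul (sc z) A.
Proof. destruct z; dM A; unfold sc; meqs; ring. Qed.
Lemma center X : Mmul X Dm = Mmul Dm X -> Mmul X Psw = Mmul Psw X -> X = sc (m11 X).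
Proof.
  dM X; unfold Dm, Psw, diag, sc; simpl; intros H1 H2; injection H1; injection H2; intros.
  meqs; lra.
Qed.
Lemma Dm_U : inU2 Dm.
Proof. apply diag_U; simpl; ring. Qed.
Lemma inU1_conj z : inU1 z -> Cmul (Cconj z) z = Defs.C1.
Proof. destruct z; unfold inU1, Cnorm2; simpl; intro; meqs; nsatz. Qed.
Lemma sc_U z : inU1 z -> inU2 (sc z).
Proof. destruct z; unfold inU1, Cnorm2, inU2, sc; simpl; intro; meqs; nsatz. Qed.
Lemma U_sc w : inU2 (sc w) -> inU1 w.
Proof. destruct w; unfold inU1, Cnorm2, inU2, sc; simpl; intro H; injection H; intros; nsatz. Qed.
Lemma Cmul_1 z : Cmul z Defs.C1 = z.
Proof. destruct z; meqs; ring. Qed.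
Lemma m11_sc z : m11 (sc z) = z.
Proof. apply Cmul_1. Qed.
Lemma sc_mul z w : Mmul (sc z) (sc w) = sc (Cmul z w).
Proof. destruct z, w; unfold sc; meqs; ring. Qed.
Lemma sc_inj z w : sc z = sc w -> z = w.
Proof. intro H; rewrite <- (m11_sc z), <- (m11_sc w), H; reflexivity. Qed.

Section Tau2.
Variable tau : M2 -> M2.
Hypothesis Ht : is_group_aut inU2 Mmul tau.

Lemma tinj X Y : inU2 X -> inU2 Y -> tau X = tau Y -> X = Y.
Proof. apply Ht. Qed.
Lemma tsurj Y : inU2 Y -> exists X, inU2 X /\ tau X = Y.
Proof. apply Ht. Qed.

Lemma tau_sc z : inU1 z -> tau (sc z) = sc (m11 (tau (sc z))) /\ inU1 (m11 (tau (sc z))).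
Proof.
  intro Hz. assert (HT : inU2 (tau (sc z))) by (apply tU; auto using sc_U).
  assert (C : forall Y, inU2 Y -> Mmul (tau (sc z)) Y = Mmul Y (tau (sc z))).
  { intros Y HY. destruct (tsurj Y HY) as (X & HX & <-).
    rewrite <- !(tM tau Ht), sc_comm; auto using sc_U. }
  assert (E : tau (sc z) = sc (m11 (tau (sc z)))) by (apply center; apply C; auto using Dm_U, Psw_U).
  split; auto. apply U_sc; rewrite <- E; auto.
Qed.

Lemma sc_pre X w : inU2 X -> tau X = sc w -> X = sc (m11 X).
Proof.
  intros HX E. apply center; apply tinj; auto using Dm_U, Psw_U with u2;
  rewrite !(tM tau Ht), E, sc_comm; auto using Dm_U, Psw_U.
Qed.

Lemma tau_SU2 A : inSU2 A -> inSU2 (tau A).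
Proof.
  intro H. destruct (decomp A H) as (X1 & P1 & C & Q & X2 & P2 & H1 & H2 & H3 & H4 & H5 & H6 & ->).
  split. apply tU; auto; apply W_U; auto.
  rewrite (tau_W tau Ht) by auto. apply det_W; apply tU; auto.
Qed.

Lemma tau_SU2_pre A : inU2 A -> inSU2 (tau A) -> inSU2 A.
Proof.
  intros HA H. destruct (decomp _ H) as (X1 & P1 & C & Q & X2 & P2 & H1 & H2 & H3 & H4 & H5 & H6 & E).
  destruct (tsurj _ H1) as (Y1 & K1 & <-). destruct (tsurj _ H2) as (Y2 & K2 & <-).
  destruct (tsurj _ H3) as (Y3 & K3 & <-). destruct (tsurj _ H4) as (Y4 & K4 & <-).
  destruct (tsurj _ H5) as (Y5 & K5 & <-). destruct (tsurj _ H6) as (Y6 & K6 & <-).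
  rewrite <- (tau_W tau Ht) in E by auto.
  apply tinj in E; auto using W_U. subst. split; auto. apply det_W; auto.
Qed.
End Tau2.
Lemma half_sqrt x : -1 < x -> exists k n, k*n = 1 /\ n*n = 2+2*x.
Proof.
  intro H. set (n := sqrt (2+2*x)). assert (Hn : n*n = 2+2*x) by (apply sqrt_sqrt; lra).
  assert (n <> 0) by (intro E; rewrite E in Hn; lra).
  exists (/n), n. split; auto. field; auto.
Qed.

Lemma sqrt_U1 z : inU1 z -> exists w, inU1 w /\ Cmul w w = z.
Proof.
  destruct z as [x y]; unfold inU1, Cnorm2; simpl; intro H.
  destruct (Req_dec x (-1)) as [E|E].
  - exists (mkC 0 1). assert (y = 0) by nra. subst. split; [unfold inU1, Cnorm2; simpl; ring|meqs; ring].
  - assert (-1 < x) by nra. destruct (half_sqrt x) as (k & n & Hk & Hn); auto.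
    exists (mkC ((1+x)*k) (y*k)). clear E H0. split; unfold inU1, Cnorm2; simpl; [|meqs]; nsatz.
Qed.

Lemma sqrt_SU2 A : inSU2 A -> exists B, inSU2 B /\ Mmul B B = A.
Proof.
  intro H. destruct (SU2_form A H) as (x & y & u & v & Hn & ->).
  destruct (Req_dec x (-1)) as [E|E].
  - exists (mkM (mkC 0 1) Defs.C0 Defs.C0 (mkC 0 (-1))).
    assert (y = 0) by nra. assert (u = 0) by nra. assert (v = 0) by nra. subst.
    split; [split|]; unfold inU2; meqs; ring.
  - assert (-1 < x) by nra. destruct (half_sqrt x) as (k & n & Hk & Hn'); auto.
    exists (mkM (mkC ((1+x)*k) (y*k)) (mkC (u*k) (v*k)) (mkC (-(u*k)) (v*k)) (mkC ((1+x)*k) (-(y*k)))).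
    clear E H0. split; [split|]; unfold inU2; meqs; nsatz.
Qed.

Lemma Mdet_scale c A : Mdet (Mscale c A) = Cmul (Cmul c c) (Mdet A).
Proof. destruct c; dM A; meqs; ring. Qed.
Lemma Msq_scale c A : Mmul (Mscale c A) (Mscale c A) = Mscale (Cmul c c) (Mmul A A).
Proof. destruct c; dM A; meqs; ring. Qed.
Lemma cx_a z w : Cmul (Cconj z) z = Defs.C1 -> Cmul z (Cmul (Cconj z) w) = w.
Proof. destruct z, w; simpl; intro H; injection H; intros; meqs; nsatz. Qed.
Lemma cx_b z c : Cmul (Cmul z c) (Cmul z c) = Cmul (Cmul z z) (Cmul c c).
Proof. destruct z, c; meqs; ring. Qed.

Lemma rho_eq a b : inU1SU2 a -> inU1SU2 b -> rhohat a = rhohat b -> prodMul a a = prodMul b b.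
Proof.
  destruct a as [z A], b as [z' A']; unfold inU1SU2, rhohat, prodMul; simpl.
  intros [Hz HA] [Hz' HA'] E.
  assert (Hzz := inU1_conj z Hz).
  set (c := Cmul (Cconj z) z').
  assert (EA : A = Mscale c A').
  { unfold c. rewrite <- Mscale_scale, <- E, Mscale_scale, Hzz, Mscale_C1; reflexivity. }
  assert (Ecc : Cmul c c = Defs.C1).
  { assert (D := f_equal Mdet EA). rewrite Mdet_scale, (proj2 HA), (proj2 HA') in D.
    rewrite Cmul_1 in D. symmetry; exact D. }
  assert (Ez : z' = Cmul z c) by (unfold c; symmetry; apply cx_a; auto).
  rewrite EA, Msq_scale, Ecc, Mscale_C1, Ez, cx_b, Ecc, Cmul_1. reflexivity.
Qed.

Theorem mainTheorem13 (tau : M2 -> M2) :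
  is_group_aut inU2 Mmul tau ->
  exists tt : Cx * M2 -> Cx * M2,
    is_group_aut inU1SU2 prodMul tt /\
    (forall p, inU1SU2 p -> rhohat (tt p) = tau (rhohat p)) /\
    (forall tt' : Cx * M2 -> Cx * M2,
       is_group_aut inU1SU2 prodMul tt' ->
       (forall p, inU1SU2 p -> rhohat (tt' p) = tau (rhohat p)) ->
       forall p, inU1SU2 p -> tt' p = tt p).
Proof.
  intro Ht.
  set (tt := fun p : Cx * M2 => (m11 (tau (sc (fst p))), tau (snd p))).
  assert (Hrho : forall p, inU1SU2 p -> rhohat (tt p) = tau (rhohat p)).
  { intros [z A] [Hz HA]; unfold tt, rhohat; simpl.
    destruct (tau_sc tau Ht z Hz) as [E _].
    rewrite !rho_sc, (tM tau Ht), <- E; auto using sc_U. apply HA. }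
  assert (Haut : is_group_aut inU1SU2 prodMul tt).
  { split; [|split; [|split]].
    - intros [z A] [Hz HA]; unfold tt; simpl. split; simpl.
      + apply (tau_sc tau Ht z Hz).
      + apply (tau_SU2 tau Ht A HA).
    - intros [z A] [w B] [Hz HA] [Hw HB]; unfold tt, prodMul; simpl.
      destruct (tau_sc tau Ht z Hz) as [Ez _]. destruct (tau_sc tau Ht w Hw) as [Ew _].
      rewrite <- sc_mul, (tM tau Ht), Ez, Ew, sc_mul, m11_sc, (tM tau Ht);
        auto using sc_U; try apply HA; try apply HB; rewrite ?m11_sc; reflexivity.
    - intros [z A] [w B] [Hz HA] [Hw HB]; unfold tt; simpl. intro E. injection E as E1 E2.
      destruct (tau_sc tau Ht z Hz) as [Ez _]. destruct (tau_sc tau Ht w Hw) as [Ew _].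
      rewrite E1 in Ez. rewrite <- Ew in Ez. apply (tinj tau Ht) in Ez; auto using sc_U.
      apply sc_inj in Ez. apply (tinj tau Ht) in E2; try apply HA; try apply HB. subst; reflexivity.
    - intros [w B] [Hw HB]; simpl in *.
      destruct (tsurj tau Ht (sc w) (sc_U w Hw)) as (X & HX & EX).
      assert (EX' := sc_pre tau Ht X w HX EX).
      destruct (tsurj tau Ht B (proj1 HB)) as (A & HA & EA).
      exists (m11 X, A). split; [split|]; simpl.
      + apply U_sc; rewrite <- EX'; auto.
      + apply (tau_SU2_pre tau Ht); auto. rewrite EA; auto.
      + unfold tt; simpl. rewrite <- EX', EX, m11_sc, EA. reflexivity. }
  exists tt. split; [exact Haut|split; [exact Hrho|]].
  intros tt' Haut' Hrho' [z A] [Hz HA].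
  destruct (sqrt_U1 z Hz) as (w & Hw & Ew). destruct (sqrt_SU2 A HA) as (B & HB & EB).
  assert (Hq : inU1SU2 (w, B)) by (split; auto).
  replace (z, A) with (prodMul (w, B) (w, B)) by (unfold prodMul; simpl; rewrite Ew, EB; reflexivity).
  destruct Haut as (C1' & M1 & _ & _). destruct Haut' as (C2 & M2' & _ & _).
  rewrite M1, M2' by auto. apply rho_eq; auto.
  rewrite Hrho, Hrho'; auto.
Qed.
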